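(* Let $G$ be a completable graph and let $A(G),B(G)$ be $G$-partial matrices with $0<A(G)\leq B(G)$. Then $0<\det(\widehat{A})\leq\det(\widehat{B})$, where $\widehat{A},\widehat{B}$ are the maximum determinant positive definite completions of $A(G),B(G)$.
   Context: A graph $G=(V,E)$ is a finite undirected graph on $V=\{1,\dots,n\}$ containing all loops. A $G$-partial matrix has entries specified exactly for $\{i,j\}\in E$; a completion agrees with it on $E$; differences are entrywise on $E$. It is partial positive (semi)definite if Hermitian on $E$ and every principal submatrix indexed by a clique is positive (semi)definite. $C(G)\leq D(G)$ means $D(G)-C(G)$ is partial positive semidefinite, and $0<C(G)$ means $C(G)$ is partial positive definite. $G$ is completable if every $G$-partial positive semidefinite matrix has a positive semidefinite completion (equivalently chordal). The maximum determinant positive definite completion of a partial positive definite matrix is its unique positive definite completion of largest determinant. *)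

(* Defs.v *)
From HB Require Import structures.
From mathcomp Require Import all_boot all_order all_algebra.
Set Implicit Arguments. Unset Strict Implicit. Unset Printing Implicit Defensive.
Import Order.TTheory GRing.Theory Num.Theory.
Local Open Scope ring_scope.

Section Defs.
Variable C : numClosedFieldType.

Definition is_graph (n : nat) (e : rel 'I_n) : Prop :=
  (forall i, e i i) /\ (forall i j, e i j = e j i).

Definition ctrmx m n (M : 'M[C]_(m, n)) : 'M[C]_(n, m) := (map_mx Num.conj M)^T.

Definition hermitian n (M : 'M[C]_n) : Prop := forall i j, M i j = (M j i)^*.

Definition psd n (M : 'M[C]_n) : Prop :=
  hermitian M /\ forall x : 'cV[C]_n, 0 <= (ctrmx x *m M *m x) 0 0.
Definition pd n (M : 'M[C]_n) : Prop :=
  hermitian M /\ forall x : 'cV[C]_n, x != 0 -> 0 < (ctrmx x *m M *m x) 0 0.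

(* G-partial matrices are represented by full matrices whose entries off the
   edge set are ignored. *)
Definition is_clique n (e : rel 'I_n) (S : {set 'I_n}) : Prop :=
  forall i j, i \in S -> j \in S -> e i j.

Definition principal_submx n (A : 'M[C]_n) (S : {set 'I_n}) : 'M[C]_#|S| :=
  \matrix_(i < #|S|, j < #|S|) A (enum_val i) (enum_val j).

Definition hermitian_on n (e : rel 'I_n) (A : 'M[C]_n) : Prop :=
  forall i j, e i j -> A i j = (A j i)^*.

Definition partial_psd n (e : rel 'I_n) (A : 'M[C]_n) : Prop :=
  hermitian_on e A /\
  forall S : {set 'I_n}, is_clique e S -> psd (principal_submx A S).

Definition partial_pd n (e : rel 'I_n) (A : 'M[C]_n) : Prop :=
  hermitian_on e A /\
  forall S : {set 'I_n}, is_clique e S -> pd (principal_submx A S).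

Definition completion n (e : rel 'I_n) (A M : 'M[C]_n) : Prop :=
  forall i j, e i j -> M i j = A i j.

Definition partial_le n (e : rel 'I_n) (A B : 'M[C]_n) : Prop :=
  partial_psd e (B - A).

Definition completable n (e : rel 'I_n) : Prop :=
  forall A : 'M[C]_n, partial_psd e A -> exists M, completion e A M /\ psd M.

Definition maxdet_completion n (e : rel 'I_n) (A M : 'M[C]_n) : Prop :=
  completion e A M /\ pd M /\
  forall M' : 'M[C]_n, completion e A M' -> pd M' -> \det M' <= \det M.

End Defs.

(* Main.v *)
Require Import Defs.
From HB Require Import structures.
From mathcomp Require Import all_boot all_order all_algebra.
From mathcomp Require Import ring.
Set Implicit Arguments. Unset Strict Implicit.
Import Order.TTheory GRing.Theory Num.Theory.
Local Open Scope ring_scope.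

Section Aux.
Variable C : numClosedFieldType.

Lemma ctrmxK m n (M : 'M[C]_(m, n)) : ctrmx (ctrmx M) = M.
Proof. by apply/matrixP => i j; rewrite !mxE conjCK. Qed.

Lemma ctrmx0 m n : ctrmx (0 : 'M[C]_(m, n)) = 0.
Proof. by apply/matrixP => i j; rewrite !mxE rmorph0. Qed.

Lemma ctrmx_neq0 m n (M : 'M[C]_(m, n)) : M != 0 -> ctrmx M != 0.
Proof.
move=> H; apply/eqP => H0; move/eqP: H; apply.
by rewrite -(ctrmxK M) H0 ctrmx0.
Qed.

Lemma pd_row n (M : 'M[C]_n) (v : 'rV[C]_n) :
  pd M -> v != 0 -> 0 < (v *m M *m ctrmx v) 0 0.
Proof.
move=> [_ H] vn; have := H (ctrmx v) (ctrmx_neq0 vn); by rewrite ctrmxK.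
Qed.

Lemma psd_row n (M : 'M[C]_n) (v : 'rV[C]_n) :
  psd M -> 0 <= (v *m M *m ctrmx v) 0 0.
Proof.
move=> [_ H]; have := H (ctrmx v); by rewrite ctrmxK.
Qed.

Lemma vv_ge0 n (v : 'rV[C]_n) : 0 <= (v *m ctrmx v) 0 0.
Proof.
rewrite !mxE; apply: sumr_ge0 => i _; rewrite !mxE; exact: mul_conjC_ge0.
Qed.

Lemma eig_qf n (M : 'M[C]_n) (v : 'rV[C]_n) z :
  v *m M = z *: v -> (v *m M *m ctrmx v) 0 0 = z * (v *m ctrmx v) 0 0.
Proof. by move=> ->; rewrite -scalemxAl mxE. Qed.

Lemma prodN_seq (s : seq C) :
  \prod_(z <- s) (- z) = (-1) ^+ size s * \prod_(z <- s) z.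
Proof.
elim: s => [|a s IH]; first by rewrite !big_nil mulr1.
rewrite !big_cons IH /= exprS; rewrite -mulN1r; ring.
Qed.

Lemma det_prod_eig n (N : 'M[C]_n) : exists s : seq C,
  (forall z, z \in s -> eigenvalue N z) /\ \det N = \prod_(z <- s) z.
Proof.
have [s Hs] := closed_field_poly_normal (char_poly N).
rewrite (monicP (char_poly_monic N)) scale1r in Hs.
exists s; split.
  by move=> z zs; rewrite eigenvalue_root_char Hs root_prod_XsubC.
have Hsz : size s = n.
  by have := size_char_poly N; rewrite Hs size_prod_XsubC => -[].
have := char_poly_det N; rewrite Hs -horner_coef0 horner_prod.
under eq_bigr do rewrite hornerXsubC sub0r.
rewrite prodN_seq Hsz => /(congr1 (fun x => (-1) ^+ n * x)).
by rewrite !mulrA -exprMn mulrNN mulr1 expr1n !mul1r => ->.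
Qed.

Lemma pd_det_gt0 n (P : 'M[C]_n) : pd P -> 0 < \det P.
Proof.
move=> HP; have [s [Hs ->]] := det_prod_eig P; rewrite big_seq.
apply: prodr_gt0 => z /Hs /eigenvalueP [v Hv vn].
have q := pd_row HP vn; rewrite (eig_qf Hv) in q.
have w0 := vv_ge0 v.
have wn : (v *m ctrmx v) 0 0 != 0.
  by apply/eqP => h; move: q; rewrite h mulr0 ltxx.
have wp : 0 < (v *m ctrmx v) 0 0 by rewrite lt_def wn w0.
by rewrite -(pmulr_lgt0 _ wp).
Qed.

Lemma det_mono n (P D : 'M[C]_n) : pd P -> psd D -> \det P <= \det (P + D).
Proof.
move=> HP HD; have dP := pd_det_gt0 HP.
have uP : P \in unitmx by rewrite unitmxE unitfE gt_eqF.
set N := (P + D) *m invmx P.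
have NP : N *m P = P + D by rewrite /N mulmxKV.
have dN : 1 <= \det N.
  have [s [Hs ->]] := det_prod_eig N; rewrite big_seq.
  apply: (big_ind (fun x => 1 <= x)) => //; first exact: mulr_ege1.
  move=> z /Hs /eigenvalueP [v Hv vn].
  have H1 : v *m (P + D) = z *: (v *m P) by rewrite -NP mulmxA Hv scalemxAl.
  have H2 : (v *m (P + D) *m ctrmx v) 0 0 = z * (v *m P *m ctrmx v) 0 0.
    by rewrite H1 -scalemxAl mxE.
  move: H2; rewrite mulmxDr mulmxDl mxE => H2.
  have a0 := pd_row HP vn; have d0 := psd_row v HD.
  rewrite -(ler_pM2r a0) mul1r -H2 lerDl //.
by rewrite -NP det_mulmx ler_peMl // ltW.
Qed.

End Aux.

Theorem theorem6p12 (C : numClosedFieldType) (n : nat) (e : rel 'I_n)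
    (A B Ahat Bhat : 'M[C]_n) :
  is_graph e -> completable C e ->
  partial_pd e A -> partial_le e A B ->
  maxdet_completion e A Ahat -> maxdet_completion e B Bhat ->
  0 < \det Ahat /\ \det Ahat <= \det Bhat.
Proof.
move=> _ Hc _ Hle [cA [pA _]] [_ [_ mB]].
split; first exact: pd_det_gt0.
have [D [cD pD]] := Hc _ Hle.
apply: (le_trans (det_mono pA pD)); apply: mB.
  by move=> i j eij; rewrite !mxE cD // cA // !mxE addrC subrK.
split.
  move=> i j; rewrite !mxE rmorphD /= -(proj1 pA) -(proj1 pD) //.
move=> x xn; rewrite mulmxDr mulmxDl mxE.
have h1 : 0 < (ctrmx x *m Ahat *m x) 0 0 by case: pA => _ h; exact: h.
have h2 : 0 <= (ctrmx x *m D *m x) 0 0 by case: pD => _ h; exact: h.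
by move: (ltr_leD h1 h2); rewrite addr0.
Qed.
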